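(* For all positive integers $m,k$ and all $n\in\mathbb{Z}$, let $$D(n,m,s,k)=\det\left(f(n + mi, x, s)^j f(n + mi - 1, x, qs)^{k-j}\right)_{i,j=0}^k .$$ Then $$D(n,m,s,k) = (-1)^{\binom{k+1}{2}n + \binom{k+1}{3}m}\, s^{\binom{k+1}{2}(n-1) + \binom{k+1}{3}m}\, q^{\binom{k+1}{2}\binom{n}{2} + nm\binom{k+1}{3} + \binom{k+1}{3}\binom{m}{2} + \binom{k+1}{4}m^2} \prod_{j=0}^{k-1} \mathrm{fac}(k - j, x, q^{mj+n}s, m).$$
   Context: Let $x,s,q$ be indeterminates; all quantities live in the field of rational functions in $x,s,q$. The Carlitz $q$-Fibonacci polynomials $f(n,x,s)$ are defined by $f(0,x,s)=0$, $f(1,x,s)=1$ and $f(n, x, s) = x f(n-1, x, s) + q^{n-2} s f(n-2, x, s)$; this recurrence is required to hold for all $n\in\mathbb{Z}$, which uniquely extends $f(n,x,s)$ to negative $n$. Here $f(n,x,q^a s)$ means $f(n,x,s)$ with $s$ replaced by $q^a s$. For positive integers $r,m$ define $\mathrm{fac}(r,x,s,m)=\prod_{i=1}^r f(im,x,s)$. *)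

(* Defs.v *)
From HB Require Import structures.
From mathcomp Require Import all_boot all_order all_algebra.
Set Implicit Arguments. Unset Strict Implicit. Unset Printing Implicit Defensive.
Import Order.TTheory GRing.Theory Num.Theory.
Local Open Scope ring_scope.

(* Carlitz q-Fibonacci polynomials over an arbitrary field F:
   f(0)=0, f(1)=1, f(n) = x f(n-1) + q^(n-2) s f(n-2) for all integers n.
   For n >= 0 we compute the pair (f n, f (n+1)) forward; for n <= 0 we
   compute (f (-k), f (-k+1)) backward, solving the recurrence taken at
   index -k+1:  f(-k+1) = x f(-k) + q^(-k-1) s f(-k-1),  i.e.
   f(-k-1) = (f(-k+1) - x f(-k)) * q^(k+1) / s. *)
Section CarlitzFib.
Variables (F : fieldType) (q : F).

Fixpoint cfib_pos (x s : F) (k : nat) : F * F :=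
  match k with
  | 0%N => (0, 1)
  | k'.+1 => let p := cfib_pos x s k' in
             (p.2, x * p.2 + q ^+ k' * s * p.1)
  end.

Fixpoint cfib_neg (x s : F) (k : nat) : F * F :=
  match k with
  | 0%N => (0, 1)
  | k'.+1 => let p := cfib_neg x s k' in
             ((p.2 - x * p.1) * q ^+ k'.+1 / s, p.1)
  end.

Definition cfib (n : int) (x s : F) : F :=
  match n with
  | Posz k => (cfib_pos x s k).1
  | Negz k => (cfib_neg x s k.+1).1
  end.

Definition cfac (r : nat) (x s : F) (m : nat) : F :=
  \prod_(1 <= i < r.+1) cfib (i * m)%:Z x s.
End CarlitzFib.

Definition binz2 (n : int) : int := ((n * (n - 1)) %/ 2)%Z.

(* The field of rational functions in x, s, q (over the rationals),
   realised as the fraction field of Q[q][s][x]. *)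
Definition P3 := {poly {poly {poly rat}}}.
Definition RF := {fraction P3}.
Definition Xx : RF := tofrac ('X : P3).
Definition Xs : RF := tofrac (('X)%:P : P3).
Definition Xq : RF := tofrac (('X)%:P%:P : P3).

(* Main.v *)
Require Import Defs.
From HB Require Import structures.
From mathcomp Require Import all_boot all_order all_algebra.
From mathcomp Require Import ring zify.
Set Implicit Arguments. Unset Strict Implicit. Unset Printing Implicit Defensive.
Import Order.TTheory GRing.Theory Num.Theory.
Local Open Scope ring_scope.

Lemma binz2S (N : int) : binz2 (N + 1) = binz2 N + N.
Proof.
rewrite /binz2 (_ : (N + 1) * (N + 1 - 1) = N * 2 + N * (N - 1)); last by ring.
by rewrite divzMDl // addrC.
Qed.

Lemma binz2E (z : int) : binz2 z * 2 = z * (z - 1).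
Proof.
case: z => j.
  elim: j => [//|j IH].
  rewrite (_ : Posz j.+1 = Posz j + 1); last by lia.
  rewrite binz2S mulrDl IH; ring.
elim: j => [//|j IH].
have e : Negz j = Negz j.+1 + 1 by rewrite !NegzE; lia.
move: IH; rewrite e binz2S mulrDl => IH.
have -> : binz2 (Negz j.+1) * 2 = (binz2 (Negz j.+1) * 2 + Negz j.+1 * 2) - Negz j.+1 * 2 by ring.
rewrite IH; ring.
Qed.

Lemma binz2_inj2 (a b : int) : a * 2 = b * 2 -> a = b.
Proof. by apply: mulIf. Qed.

Lemma binz2D (a b : int) : binz2 (a + b) = binz2 a + binz2 b + a * b.
Proof. apply: binz2_inj2; rewrite !mulrDl !binz2E; ring. Qed.

Lemma binz2M (a b : int) : binz2 (a * b) = b * binz2 a + binz2 b * a ^+ 2.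
Proof.
have h1 := binz2E a; have h2 := binz2E b; have h3 := binz2E (a * b).
apply: binz2_inj2; rewrite mulrDl -mulrA h1 mulrAC h2 h3; ring.
Qed.

Lemma binz2_nat (j : nat) : binz2 j%:Z = 'C(j, 2)%:Z.
Proof.
elim: j => [//|j IH].
rewrite (_ : Posz j.+1 = Posz j + 1); last by lia.
by rewrite binz2S IH binS bin1 PoszD.
Qed.

Lemma sum_weight (h : nat -> int) k :
  \sum_(i < k.+2) h i * (k.+1 - i)%:Z = \sum_(i < k.+1) h i * (k - i)%:Z + \sum_(i < k.+1) h i.
Proof.
rewrite big_ord_recr /= subnn mulr0 addr0 -big_split /=.
apply: eq_bigr => i _.
have -> : (k.+1 - i = (k - i) + 1)%N by have := ltn_ord i; lia.
rewrite PoszD; ring.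
Qed.

Lemma sumP1 (n : int) (m k : nat) :
  \sum_(i < k.+1) (n + (m * i)%:Z) = k.+1%:Z * n + ('C(k.+1, 2) * m)%:Z.
Proof.
elim: k => [|k IH]; first by rewrite big_ord1 bin_small // mul0n muln0 mul1r.
rewrite big_ord_recr /= IH (binS k.+1 1) bin1 !PoszM !PoszD; ring.
Qed.

Lemma sumS1 (n : int) (m k : nat) :
  \sum_(i < k.+1) (n + (m * i)%:Z) * (k - i)%:Z = 'C(k.+1, 2)%:Z * n + 'C(k.+1, 3)%:Z * m%:Z.
Proof.
elim: k => [|k IH]; first by rewrite big_ord1 !bin_small // subnn; ring.
rewrite (sum_weight (fun i => n + (m * i)%:Z)) IH sumP1.
rewrite (binS k.+1 1) (binS k.+1 2) bin1 !PoszM !PoszD; ring.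
Qed.

Lemma sumP3 (n : int) (m k : nat) :
  \sum_(i < k.+1) binz2 (n + (m * i)%:Z) = k.+1%:Z * binz2 n + n * m%:Z * 'C(k.+1, 2)%:Z
    + ('C(k.+1, 2) * 'C(m, 2))%:Z + ('C(k.+1, 3) * m ^ 2)%:Z.
Proof.
elim: k => [|k IH]; first by rewrite big_ord1 (_ : (m * @ord0 0 = 0)%N) ?muln0 // (_ : binomial 1 2 = 0%N) // (_ : binomial 1 3 = 0%N) // addr0 // !mul0n; ring.
rewrite big_ord_recr (_ : nat_of_ord (@ord_max k.+1) = k.+1) // IH -!mulnn binz2D !PoszM binz2M !binz2_nat.
rewrite (binS k.+1 1) (binS k.+1 2) bin1.
move: ('C(k.+1, 2)) ('C(k.+1, 3)) ('C(m, 2)) => c2 c3 cm.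
rewrite /= ?PoszM ?PoszD; ring.
Qed.

Lemma sumS3 (n : int) (m k : nat) :
  \sum_(i < k.+1) binz2 (n + (m * i)%:Z) * (k - i)%:Z = 'C(k.+1, 2)%:Z * binz2 n + n * m%:Z * 'C(k.+1, 3)%:Z
            + ('C(k.+1, 3) * 'C(m, 2))%:Z + ('C(k.+1, 4) * m ^ 2)%:Z.
Proof.
elim: k => [|k IH]; first by rewrite big_ord1 (_ : (0 - @ord0 0 = 0)%N) // (_ : binomial 1 2 = 0%N) // (_ : binomial 1 3 = 0%N) // (_ : binomial 1 4 = 0%N) // !mul0n; ring.
rewrite (sum_weight (fun i => binz2 (n + (m * i)%:Z))) IH sumP3.
rewrite (binS k.+1 1) (binS k.+1 2) (binS k.+1 3) bin1 -!mulnn.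
move: ('C(k.+1, 2)) ('C(k.+1, 3)) ('C(k.+1, 4)) ('C(m, 2)) => c2 c3 c4 cm.
rewrite ?PoszM ?PoszD; ring.
Qed.

Section HV.
Variable R : comPzRingType.

Definition HW n (a b : 'I_n.+1 -> R) : 'M[R]_n.+1 :=
  \matrix_(i, j) (a j ^+ i * b j ^+ (n - i)).

Lemma det_HW n (a b : 'I_n.+1 -> R) : (forall j, GRing.lreg (b j)) ->
  \det (HW a b) = \prod_(i < n.+1) \prod_(j < n.+1 | (i < j)%N) (a j * b i - a i * b j).
Proof.
elim: n a b => [|n IHn] a b breg.
  rewrite [\det _]det_mx11 !mxE big_ord1 big1 ?mulr1 // => -[[]] //.
pose a' := fun i : 'I_n.+1 => a (lift 0 i).
pose b' := fun i : 'I_n.+1 => b (lift 0 i).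
pose C : 'M_n.+1 := diag_mx (\row_(i < n.+1) (a' i * b 0 - a 0 * b' i)).
pose D : 'M[R]_n.+2 := b 0 *: (1 : 'M[R]_n.+2) - a 0 *: (\matrix_(i, j) (i == j.+1 :> nat)%:R : 'M[R]_n.+2).
have detD : \det D = b 0 ^+ n.+2.
  rewrite det_trig.
    rewrite (eq_bigr (fun _ => b 0)) ?prodr_const ?card_ord // => i _.
    by rewrite !mxE eqxx ltn_eqF // mulr0 subr0 mulr1.
  apply/is_trig_mxP => i j lij; rewrite !mxE.
  have -> : (i == j) = false by apply/negbTE; rewrite -val_eqE /= neq_ltn lij.
  by rewrite ltn_eqF ?mulr0 ?subr0 // leqW.
suff: D * HW a b = block_mx (b 0 ^+ n.+2)%:M (\row_j (b 0 * b' j ^+ n.+1)) 0 (HW a' b' *m C) :> 'M_(1 + n.+1).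
  move=> /(congr1 determinant); rewrite detM detD det_ublock det_scalar1 det_mulmx.
  move/(lregX (n:=n.+2) (breg 0)) => ->.
  rewrite IHn; last by move=> j; apply: breg.
  rewrite [RHS]big_ord_recl mulrC; congr (_ * _).
    rewrite det_diag [RHS]big_mkcond [RHS]big_ord_recl /= mul1r.
    by apply: eq_bigr => i _; rewrite !mxE.
  apply: eq_bigr => i _.
  rewrite [RHS]big_mkcond [RHS]big_ord_recl /= mul1r big_mkcond.
  by apply: eq_bigr => j _.
rewrite -mulmxE mulmxBl -!scalemxAl mul1mx; apply/matrixP => i j.
rewrite !mxE; under eq_bigr do rewrite !mxE.
case: splitP => [{i}_ -> /[!ord1]|{}i ->].
  rewrite big1 ?mulr0 ?subr0; last by move=> l _; rewrite mul0r.
  rewrite expr0 mul1r subn0; case: (@split_ordP 1 n.+1 j) => [{j}_ -> /[!ord1]|{}j ->].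
    by rewrite row_mxEl lshift0 !mxE eqxx /= mulr1n -exprS.
  by rewrite (@row_mxEr _ 1 1 n.+1) mxE rshift1.
rewrite (bigD1 (widen_ord (leqnSn n.+1) i)) //= ?add1n eqxx mul1r big1 ?addr0; last first.
  move=> l nli; rewrite ?add1n eqSS (_ : (i == l :> nat) = false) ?mul0r //.
  apply/negbTE; apply: contra nli => /eqP h; apply/eqP/val_inj; by rewrite /= h.
case: (@split_ordP 1 n.+1 j) => [{j}_ -> /[!ord1]|{}j ->].
  rewrite (@row_mxEl _ n.+1 1 n.+1) mxE lshift0 subSS subSn ?leq_ord //.
  rewrite !exprS; ring.
rewrite (@row_mxEr _ n.+1 1 n.+1) rshift1 mul_mx_diag !mxE ?add1n subSS subSn ?leq_ord //=.
rewrite /a' /b' !exprS; ring.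
Qed.
End HV.

Lemma det_hvander (R : comNzRingType) n (a b : 'I_n.+1 -> R) :
  \det (\matrix_(i, j) (a i ^+ j * b i ^+ (n - j)))
  = \prod_(i < n.+1) \prod_(j < n.+1 | (i < j)%N) (a j * b i - a i * b j).
Proof.
pose a' := fun i => (a i)%:P : {poly R}.
pose b' := fun i => (b i)%:P + 'X : {poly R}.
have breg : forall j, GRing.lreg (b' j).
  by move=> j; apply: monic_lreg; rewrite /b' addrC monicXaddC.
have := det_HW a' breg.
move=> /(congr1 (horner_eval 0)); rewrite -det_map_mx rmorph_prod.
have -> : map_mx (horner_eval 0) (HW a' b') = (\matrix_(i, j) (a i ^+ j * b i ^+ (n - j)))^T.
  apply/matrixP => i j; rewrite !mxE rmorphM !rmorphXn /= !horner_evalE.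
  by rewrite hornerD hornerX addr0 !hornerC.
rewrite det_tr => ->; apply: eq_bigr => i _; rewrite rmorph_prod.
apply: eq_bigr => j _; rewrite rmorphB !rmorphM /= !horner_evalE.
by rewrite !hornerD !hornerX !addr0 !hornerC.
Qed.

Section CF.
Variables (F : fieldType) (q : F).
Hypothesis q0 : q != 0.

Lemma cfib_negE (x s : F) (j : nat) :
  cfib q (- (j%:Z)) x s = (cfib_neg q x s j).1 /\
  cfib q (- (j%:Z) + 1) x s = (cfib_neg q x s j).2.
Proof.
elim: j => [|j [IH1 IH2]]; first by [].
have -> : - (j.+1%:Z) = Negz j by rewrite NegzE.
split; first by [].
have -> : Negz j + 1 = - (j%:Z) by rewrite NegzE; lia.
by rewrite IH1.
Qed.

Lemma cfib_rec (x s : F) (n : int) : s != 0 ->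
  cfib q (n + 2) x s = x * cfib q (n + 1) x s + q ^ n * s * cfib q n x s.
Proof.
move=> s0; case: n => j.
  have -> : Posz j + 2 = Posz j.+2 by lia.
  have -> : Posz j + 1 = Posz j.+1 by lia.
  by rewrite /= -exprnP.
have [E1 E2] := cfib_negE x s j.
have -> : Negz j + 2 = - (j%:Z) + 1 by rewrite NegzE; lia.
have -> : Negz j + 1 = - (j%:Z) by rewrite NegzE; lia.
rewrite E1 E2 /= NegzE -invr_expz -exprnP.
field.
by rewrite s0 expf_neq0.
Qed.

Lemma int_seq_eq (u v c : int -> F) :
  (forall N, c N != 0) -> (forall N, u (N + 1) = c N * u N) ->
  (forall N, v (N + 1) = c N * v N) -> u 0 = v 0 -> forall N, u N = v N.
Proof.
move=> c0 hu hv h0; case=> j.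
  elim: j => [//|j IH].
  have -> : Posz j.+1 = Posz j + 1 by lia.
  by rewrite hu hv IH.
have H : forall j : nat, u (- (j%:Z)) = v (- (j%:Z)).
  elim=> [//|i IH].
  have e : - (i%:Z) = - (i.+1%:Z) + 1 by lia.
  move: IH; rewrite e hu hv; exact: mulfI.
by rewrite NegzE H.
Qed.



Variable x : F.
Definition Cas (N : int) (s : F) :=
  cfib q (N + 1) x s * cfib q (N - 1) x (q * s) - cfib q N x s * cfib q N x (q * s).
Definition Ccl (N : int) (s : F) := (-1) ^ N * s ^ (N - 1) * q ^ (binz2 N).

Lemma cfib_rec1 (s : F) (N : int) : s != 0 ->
  cfib q (N + 1) x s = x * cfib q N x s + q ^ (N - 1) * s * cfib q (N - 1) x s.
Proof.
move=> s0; have := cfib_rec x (N - 1) s0.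
by rewrite -addrA (_ : -1 + 2 = 1) // subrK.
Qed.


Lemma Cas_step (s : F) (N : int) : s != 0 -> Cas (N + 1) s = - (q ^ N * s) * Cas N s.
Proof.
move=> s0; have qs0 : q * s != 0 by rewrite mulf_neq0.
rewrite /Cas addrK.
rewrite (cfib_rec1 (N + 1) s0) (cfib_rec1 N qs0) addrK.
have -> : q ^ (N - 1) * (q * s) = q ^ N * s.
  by rewrite mulrA -{2}(expr1z q) -expfzDr // subrK.
ring.
Qed.

Lemma Ccl_step (s : F) (N : int) : s != 0 -> Ccl (N + 1) s = - (q ^ N * s) * Ccl N s.
Proof.
move=> s0; rewrite /Ccl binz2S !expfzDr ?oppr_eq0 ?oner_eq0 // ?expr1z.
ring.
Qed.

Lemma Cas_cl (s : F) (N : int) : s != 0 -> Cas N s = Ccl N s.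
Proof.
move=> s0; apply: (@int_seq_eq (fun M => Cas M s) (fun M => Ccl M s) (fun M => - (q ^ M * s))) => /=.
- by move=> M; rewrite oppr_eq0 mulf_neq0 // expfz_neq0.
- by move=> M; apply: Cas_step.
- by move=> M; apply: Ccl_step.
rewrite /Cas /Ccl /=.
rewrite (_ : binz2 0 = 0) // !expr0z sub0r -invr_expz expr1z subn0 expr1.
by field; rewrite s0 q0.
Qed.

Lemma Eid (s : F) (N : int) (d : nat) : s != 0 ->
  cfib q (N + d%:Z) x s * cfib q (N - 1) x (q * s) - cfib q N x s * cfib q (N + d%:Z - 1) x (q * s)
  = Cas N s * cfib q d%:Z x (q ^ N * s).
Proof.
move=> s0; have qs0 : q * s != 0 by rewrite mulf_neq0.
have qNs0 : q ^ N * s != 0 by rewrite mulf_neq0 // expfz_neq0.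
pose P := fun d : nat => cfib q (N + d%:Z) x s * cfib q (N - 1) x (q * s) - cfib q N x s * cfib q (N + d%:Z - 1) x (q * s)
  = Cas N s * cfib q d%:Z x (q ^ N * s).
suff : forall d : nat, P d /\ P d.+1 by move=> /(_ d) [].
rewrite /P; elim=> [|j [IH1 IH2]].
  rewrite addr0 subrr /= mulr0; split => //.
  by rewrite /Cas addrK mulr1.
split => //.
have e1 : N + j.+2%:Z = (N + j%:Z) + 2 by lia.
have e2 : N + j.+2%:Z - 1 = (N + j%:Z - 1) + 2 by lia.
have e3 : N + j.+1%:Z = (N + j%:Z) + 1 by lia.
have e4 : N + j.+1%:Z - 1 = (N + j%:Z - 1) + 1 by lia.
have e5 : j.+2%:Z = j%:Z + 2 by lia.
have e6 : j.+1%:Z = j%:Z + 1 by lia.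
rewrite e2 e1 e5 (cfib_rec x _ s0) (cfib_rec x _ qs0) (cfib_rec x _ qNs0).
move: IH1 IH2; rewrite e4 e3 e6 => IH1 IH2.
have -> : q ^ (N + j%:Z - 1) * (q * s) = q ^ (N + j%:Z) * s.
  by rewrite mulrA -{2}(expr1z q) -expfzDr // subrK.
have -> : q ^ j%:Z * (q ^ N * s) = q ^ (N + j%:Z) * s.
  by rewrite mulrA -expfzDr // addrC.
transitivity (x * (Cas N s * cfib q (j%:Z + 1) x (q ^ N * s)) +
  q ^ (N + j%:Z) * s * (Cas N s * cfib q j%:Z x (q ^ N * s))); last by ring.
rewrite -IH1 -IH2; ring.
Qed.

End CF.


Unset Implicit Arguments.
Set Strict Implicit.

Lemma Xs_neq0 : Xs != 0.
Proof. by rewrite /Xs tofrac_eq0 polyC_eq0 polyX_eq0. Qed.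
Lemma Xq_neq0 : Xq != 0.
Proof. by rewrite /Xq tofrac_eq0 !polyC_eq0 polyX_eq0. Qed.

Lemma prod_expz (F : fieldType) (a : F) (K : nat) (e : 'I_K -> int) : a != 0 ->
  \prod_(i < K) a ^ e i = a ^ (\sum_(i < K) e i).
Proof.
move=> a0; rewrite (big_morph (fun z => a ^ z) (fun u v => expfzDr u v a0) (expr0z a)) //.
Qed.

Lemma prod_gt (R : comNzRingType) (k i : nat) (G : nat -> R) :
  \prod_(l < k.+1 | (i < l)%N) G l = \prod_(d < k - i) G (i + d.+1)%N.
Proof.
rewrite (eq_bigl (fun l : 'I_k.+1 => xpredT (nat_of_ord l) && (i.+1 <= l)%N)) // -(big_geq_mkord i.+1 k.+1 xpredT).
rewrite -{1}(add0n i.+1) big_addn big_mkord subSS.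
by apply: eq_bigr => d _; rewrite addnC addnS.
Qed.

Theorem lemma2 (m k : nat) (n : int) :
  (0 < m)%N -> (0 < k)%N ->
  \det (\matrix_(i < k.+1, j < k.+1)
          (cfib Xq (n + (m * i)%:Z) Xx Xs ^+ j *
           cfib Xq (n + (m * i)%:Z - 1) Xx (Xq * Xs) ^+ (k - j)))
  = (-1 : RF) ^ ('C(k.+1, 2)%:Z * n + 'C(k.+1, 3)%:Z * m%:Z)
    * Xs ^ ('C(k.+1, 2)%:Z * (n - 1) + 'C(k.+1, 3)%:Z * m%:Z)
    * Xq ^ ('C(k.+1, 2)%:Z * binz2 n + n * m%:Z * 'C(k.+1, 3)%:Z
            + ('C(k.+1, 3) * 'C(m, 2))%:Z + ('C(k.+1, 4) * m ^ 2)%:Z)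
    * \prod_(0 <= j < k)
        cfac Xq (k - j) Xx (Xq ^ ((m * j)%:Z + n) * Xs) m.
Proof.
move=> m0 k0.
have s0 := Xs_neq0; have q0 := Xq_neq0.
rewrite (det_hvander (fun i : 'I_k.+1 => cfib Xq (n + (m * i)%:Z) Xx Xs)
                     (fun i : 'I_k.+1 => cfib Xq (n + (m * i)%:Z - 1) Xx (Xq * Xs))).
rewrite (eq_bigr (fun i : 'I_k.+1 => Ccl Xq (n + (m * i)%:Z) Xs ^+ (k - i) *
           cfac Xq (k - i) Xx (Xq ^ ((m * i)%:Z + n) * Xs) m)); last first.
  move=> i _.
  rewrite (eq_bigr (fun l : 'I_k.+1 => Ccl Xq (n + (m * i)%:Z) Xs * cfib Xq (m * (l - i))%:Z Xx (Xq ^ (n + (m * i)%:Z) * Xs))); last first.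
    move=> l il.
    have -> : n + (m * l)%:Z = n + (m * i)%:Z + (m * (l - i))%:Z.
      by rewrite -addrA -PoszD -mulnDr subnKC // ltnW.
    have E := Eid q0 Xx (n + (m * i)%:Z) (m * (l - i)) s0.
    rewrite (Cas_cl q0 Xx _ s0) in E.
    exact: E.
  rewrite big_split (@prod_gt _ k i (fun _ => Ccl Xq (n + (m * i)%:Z) Xs)) prodr_const card_ord.
  congr (_ * _).
  rewrite (@prod_gt _ k i (fun l => cfib Xq (m * (l - i))%:Z Xx (Xq ^ (n + (m * i)%:Z) * Xs))) /cfac big_add1 big_mkord.
  apply: eq_bigr => d _; rewrite addKn [(m * d.+1)%N]mulnC [n + _]addrC.
  by [].
have cfac0 : forall c, cfac Xq 0 Xx c m = 1 by move=> c; rewrite /cfac big_geq.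
have m10 : (-1 : RF) != 0 by rewrite oppr_eq0 oner_eq0.
rewrite big_split; congr (_ * _); last first.
  rewrite big_ord_recr /= subnn cfac0 mulr1 big_mkord.
  by [].
rewrite /Ccl.
under eq_bigr do rewrite !exprMn !exprnP !exprz_exp.
rewrite !big_split (@prod_expz _ _ _ _ m10) (@prod_expz _ _ _ _ s0) (@prod_expz _ _ _ _ q0).
rewrite (sumS1 n m k) (sumS3 n m k).
congr (_ * _ ^ _ * _).
rewrite -(sumS1 (n - 1) m k); apply: eq_bigr => i _.
congr (_ * _); rewrite addrAC //.
Qed.
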